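(* Let $n\in\mathbb{N}$ and $b_{n,i}(x)=\binom ni x^i(1-x)^{n-i}$ for $i=0,1,\dots,n$. Then \[ \sum_{i,j=0}^n\bigl(b_{n,i}(x)b_{n,j}(x)+b_{n,i}(y)b_{n,j}(y)-2b_{n,i}(x)b_{n,j}(y)\bigr)f\Bigl(\frac{i+j}{2n}\Bigr)\ge 0 \] for every convex continuous function $f:[0,1]\to\mathbb{R}$ and all $x,y\in[0,1]$. *)

(* Defs.v *)
From Stdlib Require Import Reals.
Open Scope R_scope.

Definition bern (n i : nat) (x : R) : R :=
  C n i * x ^ i * (1 - x) ^ (n - i).

Definition convex_on01 (f : R -> R) : Prop :=
  forall x y t : R, 0 <= x <= 1 -> 0 <= y <= 1 -> 0 <= t <= 1 ->
    f (t * x + (1 - t) * y) <= t * f x + (1 - t) * f y.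

Definition continuous_on01 (f : R -> R) : Prop :=
  forall x : R, 0 <= x <= 1 ->
    limit1_in f (fun y => 0 <= y <= 1) (f x) x.

(* The double sum in the statement; sum_f_R0 g n = g 0 + ... + g n. *)
Definition bern_sum (n : nat) (f : R -> R) (x y : R) : R :=
  sum_f_R0 (fun i =>
    sum_f_R0 (fun j =>
      (bern n i x * bern n j x + bern n i y * bern n j y
         - 2 * bern n i x * bern n j y)
      * f (INR (i + j) / (2 * INR n))) n) n.

(* Main.v *)
Require Import Defs.
From Stdlib Require Import Reals Lra Lia.
Open Scope R_scope.

Fixpoint B (n l : nat) (p : R) : R :=
  match n, l with
  | O, O => 1
  | O, S _ => 0
  | S n, O => (1 - p) * B n O p
  | S n, S l => (1 - p) * B n (S l) p + p * B n l p
  end.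

Lemma B_gt n l p : (n < l)%nat -> B n l p = 0.
Proof.
  revert l; induction n as [|n IH]; intros [|l] H; simpl; try lia; auto.
  rewrite IH by lia. rewrite IH by lia. ring.
Qed.

Lemma C0 p : C p 0 = 1.
Proof. unfold C; rewrite Nat.sub_0_r; simpl. field. apply INR_fact_neq_0. Qed.
Lemma Cnn p : C p p = 1.
Proof. unfold C; rewrite Nat.sub_diag; simpl. field. apply INR_fact_neq_0. Qed.

Lemma bernB n l p : (l <= n)%nat -> bern n l p = B n l p.
Proof.
  unfold bern.
  revert l; induction n as [|n IH]; intros [|l] H.
  - simpl. rewrite C0. ring.
  - lia.
  - simpl B. rewrite <- IH by lia. rewrite !C0, !Nat.sub_0_r. simpl. ring.
  - simpl B. destruct (Nat.eq_dec l n) as [->|Hne].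
    + rewrite (B_gt n (S n)) by lia. rewrite <- IH by lia.
      rewrite !Cnn, !Nat.sub_diag. simpl. ring.
    + rewrite <- !IH by lia. rewrite <- pascal by lia.
      replace (S n - S l)%nat with (S (n - S l)) by lia.
      replace (n - l)%nat with (S (n - S l)) by lia.
      simpl. ring.
Qed.

Lemma B_ge0 n l p : 0 <= p <= 1 -> 0 <= B n l p.
Proof.
  intros Hp. revert l; induction n as [|n IH]; intros [|l]; simpl; try lra.
  - specialize (IH 0%nat). nra.
  - pose proof (IH (S l)); pose proof (IH l). nra.
Qed.

Lemma conv_step n (f : R -> R) (hconv : convex_on01 f) k :
  (k + 2 <= 2 * n)%nat ->
  2 * f (INR (S k) / (2 * INR n)) <= f (INR k / (2 * INR n)) + f (INR (S (S k)) / (2 * INR n)).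
Proof.
  intros Hk.
  assert (Hn : 0 < INR n) by (apply lt_0_INR; lia).
  assert (Hk2 : INR (S (S k)) <= 2 * INR n).
  { replace 2 with (INR 2) by reflexivity. rewrite <- mult_INR. apply le_INR. lia. }
  assert (Hk0 : 0 <= INR k) by apply pos_INR.
  rewrite !S_INR in *.
  set (a := INR k / (2 * INR n)).
  set (b := (INR k + 1 + 1) / (2 * INR n)).
  assert (Ha : 0 <= a <= 1).
  { unfold a; split.
    - unfold Rdiv; apply Rmult_le_pos; [lra|]; left; apply Rinv_0_lt_compat; lra.
    - apply Rmult_le_reg_r with (2 * INR n); [lra|].
      unfold Rdiv; rewrite Rmult_assoc, Rinv_l; lra. }
  assert (Hb : 0 <= b <= 1).
  { unfold b; split.
    - unfold Rdiv; apply Rmult_le_pos; [lra|]; left; apply Rinv_0_lt_compat; lra.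
    - apply Rmult_le_reg_r with (2 * INR n); [lra|].
      unfold Rdiv; rewrite Rmult_assoc, Rinv_l; lra. }
  pose proof (hconv a b (1/2) Ha Hb ltac:(lra)) as Hc.
  replace (1 / 2 * a + (1 - 1 / 2) * b) with ((INR k + 1) / (2 * INR n)) in Hc
    by (unfold a, b; field; lra).
  lra.
Qed.

Definition gf (f : R -> R) (n k : nat) : R := f (INR k / (2 * INR n)).

Lemma conv_gf n f (hconv : convex_on01 f) k :
  (k + 2 <= 2 * n)%nat -> 2 * gf f n (S k) <= gf f n k + gf f n (S (S k)).
Proof. apply conv_step; assumption. Qed.

Lemma pt n (f : R -> R) x y i j : (i <= n)%nat -> (j <= n)%nat ->
  (bern n i x * bern n j x + bern n i y * bern n j y
         - 2 * bern n i x * bern n j y) * f (INR (i + j) / (2 * INR n))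
  = ((B n i x - B n i y) * (B n j x - B n j y)) * gf f n (i + j)
    + (B n i y * B n j x - B n i x * B n j y) * gf f n (i + j).
Proof.
  intros Hi Hj. unfold gf. rewrite !bernB by assumption. ring.
Qed.

Set Warnings "-notation-overridden,-ambiguous-paths,-deprecated".
From mathcomp Require Import all_boot all_order all_algebra.
From mathcomp Require Import Rstruct.
From mathcomp Require Import ring lra zify.
Import Order.TTheory GRing.Theory Num.Theory.
Local Open Scope ring_scope.

Ltac rE := rewrite ?RplusE ?RminusE ?RmultE ?RoppE ?R0E ?R1E.

Definition H (n i : nat) (p : R) : R := \sum_(l < i) B n l p.

Lemma H_rec n i p : H n.+1 i.+1 p = (1 - p) * H n i.+1 p + p * H n i p.
Proof.
  rewrite /H; elim: i => [|i IH].
  - rewrite !big_ord_recr !big_ord0 /=. rE; ring.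
  - rewrite big_ord_recr IH /= [in RHS]big_ord_recr [X in _ = _ + _ * X]big_ord_recr /=.
    rE; ring.
Qed.

Lemma H_step n i p : 0 <= p <= 1 -> H n i p <= H n i.+1 p.
Proof.
  move=> Hp; rewrite /H big_ord_recr /= lerDl.
  move: Hp => /andP [/RleP H1 /RleP H2].
  by apply/RleP; apply: B_ge0; split.
Qed.

Lemma H_mono n : forall i p q, 0 <= q -> q <= p -> p <= 1 -> H n i p <= H n i q.
Proof.
  elim: n => [|n IH] i p q hq hqp hp1.
  - rewrite /H le_eqVlt; apply/orP; left; apply/eqP; apply: eq_bigr => l _.
    by case: (nat_of_ord l).
  - case: i => [|i]; first by rewrite /H !big_ord0.
    rewrite !H_rec.
    have h1 := IH i.+1 p q hq hqp hp1.
    have h2 := IH i p q hq hqp hp1.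
    have h3 : H n i q <= H n i.+1 q by apply: H_step; rewrite hq /=; lra.
    nra.
Qed.

Lemma H_one n p : H n n.+1 p = 1.
Proof.
  elim: n => [|n IH]; first by rewrite /H big_ord_recr big_ord0 /=; rE; ring.
  rewrite H_rec IH /H big_ord_recr /= -/(H n n.+1 p) IH B_gt; last exact: Nat.lt_succ_diag_r.
  rE; ring.
Qed.

Lemma sbp (d h : nat -> R) n :
  \sum_(i < n.+1) d i * h i =
  \sum_(i < n) (\sum_(l < i.+1) d l) * (h i - h i.+1) + (\sum_(l < n.+1) d l) * h n.
Proof.
  elim: n => [|n IH].
  - by rewrite !big_ord_recr !big_ord0 /=; ring.
  - rewrite big_ord_recr IH /= [in RHS]big_ord_recr /=.
    rewrite [\sum_(l < n.+2) d l]big_ord_recr /=. ring.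
Qed.

Lemma main (n : nat) (f : R -> R)
  (hconv : convex_on01 f) (x y : R) (hx0 : 0 <= x) (hx1 : x <= 1)
  (hy0 : 0 <= y) (hy1 : y <= 1) : 0 <= bern_sum n f x y.
Proof.
  set d := fun i => B n i x - B n i y.
  set g := gf f n.
  set e := fun k => \sum_(l < k.+1) d l.
  have He : forall k, e k = H n k.+1 x - H n k.+1 y.
    by move=> k; rewrite /e /H -sumrB.
  have Hen : e n = 0 by rewrite He !H_one subrr.
  have E1 : bern_sum n f x y =
     \sum_(i < n.+1) \sum_(j < n.+1) (d i * d j) * g (i + j)%N
     + \sum_(i < n.+1) \sum_(j < n.+1) (B n i y * B n j x - B n i x * B n j y) * g (i + j)%N.
  { rewrite /bern_sum sum_f_R0E big_mkord -big_split /=; apply: eq_bigr => i _.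
    rewrite sum_f_R0E big_mkord -big_split /=; apply: eq_bigr => j _.
    rewrite pt; try (have := ltn_ord i; have := ltn_ord j; lia).
    by rE. }
  have E2 : \sum_(i < n.+1) \sum_(j < n.+1) (B n i y * B n j x - B n i x * B n j y) * g (i + j)%N = 0.
  { set S := LHS.
    have : S = - S.
    { rewrite {1}/S exchange_big /= -sumrN; apply: eq_bigr => i _.
      rewrite -sumrN; apply: eq_bigr => j _. rewrite addnC; ring. }
    move=> HS; lra. }
  rewrite E1 E2 addr0.
  have E3 : forall i, \sum_(j < n.+1) (d i * d j) * g (i + j)%N
      = d i * \sum_(j < n) e j * (g (i + j) - g (i + j.+1)).
  { move=> i.
    have := sbp d (fun j => g (i + j)) n.
    rewrite -/(e n) Hen mul0r addr0 => <-.
    rewrite mulr_sumr; apply: eq_bigr => j _; ring. }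
  under eq_bigr => i _ do rewrite E3.
  rewrite (sbp d (fun i => \sum_(j < n) e j * (g (i + j) - g (i + j.+1))) n).
  rewrite -/(e n) Hen mul0r addr0.
  have Hsign : forall i j, 0 <= e i * e j.
  { move=> i j; rewrite !He.
    have [hxy|hxy] := lerP x y.
    - have h1 := H_mono n i.+1 y x hx0 hxy hy1.
      have h2 := H_mono n j.+1 y x hx0 hxy hy1.
      nra.
    - have hxy' : y <= x by apply: ltW.
      have h1 := H_mono n i.+1 x y hy0 hxy' hx1.
      have h2 := H_mono n j.+1 x y hy0 hxy' hx1.
      nra. }
  apply: sumr_ge0 => -[i hi] _ /=.
  rewrite -sumrB mulr_sumr; apply: sumr_ge0 => -[j hj] _ /=.
  have hc : 2 * g (i + j).+1 <= g (i + j) + g (i + j).+2.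
  { have := conv_gf n f hconv (i + j).
    move=> H0; apply/RleP; rE; apply: H0.
    move: hi hj; lia. }
  have hs := Hsign i j.
  rewrite -/(e i).
  have -> : g (i + j.+1) = g (i + j).+1 by congr g; lia.
  have -> : g (i.+1 + j) = g (i + j).+1 by congr g; lia.
  have -> : g (i.+1 + j.+1) = g (i + j).+2 by congr g; lia.
  have -> : e i * (e j * (g (i + j) - g (i + j).+1) - e j * (g (i + j).+1 - g (i + j).+2))
     = (e i * e j) * (g (i + j) + g (i + j).+2 - 2 * g (i + j).+1) by ring.
  apply: mulr_ge0 => //; lra.
Qed.

Close Scope ring_scope.
Open Scope R_scope.

Theorem theorem3 (n : nat) (f : R -> R)
  (hconv : convex_on01 f) (hcont : continuous_on01 f)
  (x y : R) (hx : 0 <= x <= 1) (hy : 0 <= y <= 1) :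
  0 <= bern_sum n f x y.
Proof.
  case: hx => /RleP hx0 /RleP hx1; case: hy => /RleP hy0 /RleP hy1.
  apply/RleP; apply: main => //.
Qed.
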